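(* Let $k\geq 2$ and $n\geq k+1$ be integers. In the quasi-shuffle algebra $(\mathcal{H},\ast)$, $$ \begin{aligned} \sum_{\substack{ r, s_i\geq 1,\ s_1\geq 2 \\ r+s_1+\cdots +s_{k-1}=n}} z_{r}\ast z_{s_1,\dots, s_{k-1}} = &\sum_{\substack{ t_i\geq 1,\ t_1=1,\ t_2\geq 2 \\ t_1+\cdots+t_{k}=n}} z_{t_1,t_2,\dots, t_{k}} +(k-1) \sum_{\substack{t_i\geq 1,\ t_1\geq 2,\ t_2=1 \\ t_1+\cdots+t_{k}=n }} z_{t_1,\dots,t_{k}}\\ &+k \sum_{\substack{t_i\geq 1,\ t_1\geq 2,\ t_2\geq 2 \\ t_1+\cdots+t_{k}=n}} z_{t_1,\dots, t_{k}} + (n-k) \sum_{\substack{u_i\geq 1,\ u_1\geq 2 \\ u_1+\cdots+u_{k-1}=n }} z_{u_1,\dots, u_{k-1}}. \end{aligned} $$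
   Context: Let $\mathcal{H}$ be the free $\mathbb{Z}$-module on the free monoid generated by letters $z_s$ ($s\geq 1$ an integer); write $z_{s_1,\dots,s_k}:=z_{s_1}z_{s_2}\cdots z_{s_k}$ for a word and $1$ for the empty word. The quasi-shuffle (stuffle) product $\ast$ is the $\mathbb{Z}$-bilinear product on $\mathcal{H}$ defined on words recursively by $1\ast u=u\ast 1=u$ and $(z_{r}u)\ast(z_{s}v)=z_{r}\,(u\ast (z_{s}v))+z_{s}\,((z_{r}u)\ast v)+z_{r+s}\,(u\ast v)$ for words $u,v$ and integers $r,s\geq 1$ (juxtaposition denotes concatenation, extended linearly). *)

(* Defs.v *)
From mathcomp Require Import all_boot all_order all_algebra.
Set Implicit Arguments. Unset Strict Implicit. Unset Printing Implicit Defensive.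
Import GRing.Theory.
Local Open Scope ring_scope.

(* Words over the letters z_s are encoded as sequences of naturals s
   (z_{s_1..s_k} = [:: s_1; ...; s_k]).  An element of the free Z-module
   H is represented by its coefficient function (word -> int); all
   elements considered here are finitely supported. *)
Definition H := seq nat -> int.

Definition addH (f g : H) : H := fun w => f w + g w.
Definition scaleH (c : int) (f : H) : H := fun w => c * f w.

Definition zw (w : seq nat) : H := fun u => (u == w)%:Z.

Definition lcons (r : nat) (f : H) : H :=
  fun u => match u with
           | a :: u' => if a == r then f u' else 0
           | [::] => 0
           end.

Fixpoint stuffle (u : seq nat) : seq nat -> H :=
  match u with
  | [::] => zw
  | r :: u' =>
      fix st (v : seq nat) : H :=
        match v with
        | [::] => zw u
        | s :: v' =>
            addH (addH (lcons r (stuffle u' v)) (lcons s (st v')))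
                 (lcons (r + s) (stuffle u' v'))
        end
  end.

Definition comp_sum (m n : nat) (P : seq nat -> bool) : H :=
  fun w => \sum_(t : m.-tuple 'I_n.+1 |
                  [&& all (fun x => 0 < x)%N (map val t),
                      sumn (map val t) == n & P (map val t)])
             zw (map val t) w.

(* Main.v *)
Require Import Defs.
From mathcomp Require Import all_boot all_order all_algebra.
From mathcomp Require Import zify ring lra.
Set Implicit Arguments. Unset Strict Implicit.
Import GRing.Theory.
Local Open Scope ring_scope.
Local Open Scope nat_scope.
Definition rem_at (j : nat) (w : seq nat) := take j w ++ drop j.+1 w.

Lemma rem_dec j w : (j < size w)%N -> w = take j w ++ nth 0 w j :: drop j.+1 w.
Proof. by move=> h; rewrite -drop_nth // cat_take_drop. Qed.

Lemma rem_size j w : (j < size w)%N -> size (rem_at j w) = (size w).-1.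
Proof. move=> h; rewrite {2}(rem_dec h) /rem_at !size_cat /=; lia. Qed.

Lemma rem_all p j w : (j < size w)%N -> all p w = p (nth 0 w j) && all p (rem_at j w).
Proof. by move=> h; rewrite {1}(rem_dec h) /rem_at !all_cat /=; case: (p _); rewrite ?andbF. Qed.

Lemma rem_sumn j w : (j < size w)%N -> sumn w = (nth 0 w j + sumn (rem_at j w))%N.
Proof. move=> h; rewrite {1}(rem_dec h) /rem_at !sumn_cat /=; lia. Qed.

Lemma rem_nth0 j w : nth 0 (rem_at j w) 0 = if j == 0%N then nth 0 w 1 else nth 0 w 0.
Proof. by case: j => [|j]; case: w => [|a w] //=; rewrite /rem_at /= drop0. Qed.

Lemma set_dec j w x : (j < size w)%N -> set_nth 0 w j x = take j w ++ x :: drop j.+1 w.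
Proof. by move=> h; rewrite set_nthE h. Qed.

Lemma set_size j w x : (j < size w)%N -> size (set_nth 0 w j x) = size w.
Proof. by move=> h; rewrite size_set_nth; apply/maxn_idPr. Qed.

Lemma set_all p j w x : (j < size w)%N -> all p (set_nth 0 w j x) = p x && all p (rem_at j w).
Proof. by move=> h; rewrite set_dec // /rem_at !all_cat /=; case: (p _); rewrite ?andbF. Qed.

Lemma set_sumn j w x : (j < size w)%N -> sumn (set_nth 0 w j x) = (x + sumn (rem_at j w))%N.
Proof. move=> h; rewrite set_dec // /rem_at !sumn_cat /=; lia. Qed.

Lemma set_nth0 j w x : (j < size w)%N -> nth 0 (set_nth 0 w j x) 0 = if j == 0%N then x else nth 0 w 0.
Proof. by move=> h; rewrite nth_set_nth /= eq_sym. Qed.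

Lemma all_le_sumn w : all (fun x => x <= sumn w)%N w.
Proof.
elim: w => //= a w IH; rewrite leq_addr /=.
by apply/allP => x xw; move/allP: IH => /(_ x xw) h; apply: leq_trans h (leq_addl _ _).
Qed.

Local Open Scope ring_scope.
Lemma sum_nth w : \sum_(j < size w) (nth 0 w j)%:Z = (sumn w)%:Z.
Proof.
elim: w => [|a w IH]; first by rewrite big_ord0.
by rewrite big_ord_recl /= IH PoszD.
Qed.

Lemma count_r_min n a : \sum_(r < n.+1) ((0 < r) && (r <= a))%N%:Z = (minn n a)%:Z.
Proof.
elim: n => [|n IH]; first by rewrite big_ord1 /= min0n.
rewrite big_ord_recr /= IH. case: leqP => h; lia.
Qed.

Lemma count_r n a : (a <= n)%N -> \sum_(r < n.+1) ((0 < r) && (r <= a))%N%:Z = a%:Z.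
Proof. by move=> h; rewrite count_r_min (minn_idPr h). Qed.



Definition ins_cnt r (s w : seq nat) : int :=
  \sum_(j < size w) ((s == rem_at j w) && (r == nth 0 w j))%:Z.
Definition mrg_cnt r (s w : seq nat) : int :=
  \sum_(j < size w) ((s == set_nth 0 w j (nth 0 w j - r)) && (r <= nth 0 w j))%N%:Z.

Lemma st_cons r s0 s : stuffle [::r] (s0::s) = addH (addH (lcons r (zw (s0::s))) (lcons s0 (stuffle [::r] s))) (lcons (r+s0) (zw s)).
Proof. by []. Qed.
Lemma st_nil r : stuffle [::r] [::] = zw [::r].
Proof. by []. Qed.

Lemma stuffle1 r s w : stuffle [:: r] s w = ins_cnt r s w + mrg_cnt r s w.
Proof.
elim: s w => [|s0 s IH] [|a w]; rewrite ?st_nil ?st_cons /ins_cnt /mrg_cnt; try rewrite [size _]/=.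
- by rewrite !big_ord0.
- rewrite !big_ord_recl /= /zw /rem_at /=.
  case: w => [|b w] /=.
    by rewrite !big_ord0 /= !eqseq_cons andbT eq_sym !addr0; case: eqP.
  rewrite !big1 ?eqseq_cons ?andbF //=.
- by rewrite !big_ord0.
- rewrite /addH /lcons /zw IH /ins_cnt /mrg_cnt !big_ord_recl /rem_at /= drop0.
  under [X in _ = _ + X + _]eq_bigr do rewrite eqseq_cons add0n /bump leq0n add1n.
  under [X in _ = _ + (_ + X)]eq_bigr do rewrite eqseq_cons add0n.
  rewrite eqseq_cons.
  have key : (((s0 == a - r) && (s == w)) && (r <= a) = (a == r + s0) && (w == s))%N.
    rewrite [w == s]eq_sym; case: (s == w); rewrite ?andbT ?andbF //.
    by apply/idP/idP; [case/andP=> /eqP -> h; rewrite subnKC | move/eqP->; rewrite addKn eqxx leq_addr].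
  rewrite key [_ :: _ == w]eq_sym [r == a]eq_sym.
  case: (eqVneq a s0) => [<-|ne].
    rewrite ?eqxx.
    under [X in _ = _ + X + _]eq_bigr do rewrite andTb.
    under [X in _ = _ + (_ + X)]eq_bigr do rewrite andTb.
    case: (a == r); case: (a == r + a)%N; case: (w == _); case: (w == s) => //=; lia.
  rewrite !big1 //=.
  case: (a == r); case: (a == r + s0)%N; case: (w == _); case: (w == s) => //=; lia.
Qed.



Lemma tuple_count m n (Q : seq nat -> bool) (b : bool) v :
  \sum_(t : m.-tuple 'I_n.+1 | Q (map val t)) ((map val t == v) && b)%:Z
  = ([&& size v == m, all (fun x => x <= n)%N v, Q v & b])%:Z.
Proof.
case: (boolP ((size v == m) && all (fun x => x <= n)%N v)) => [/andP[/eqP sv av]|H].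
  have sz : size (map (fun x => inord x : 'I_n.+1) v) == m by rewrite size_map sv.
  pose t0 := Tuple sz.
  have ht0 : map val t0 = v.
    rewrite /= -map_comp map_id_in // => x xv /=; rewrite inordK //.
    by move/allP: av => /(_ x xv).
  have e : forall t : m.-tuple 'I_n.+1, (map val t == v) = (t == t0).
    by move=> t; rewrite -ht0 (inj_eq (inj_map val_inj)).
  under eq_bigr do rewrite e.
  case: (boolP (Q v)) => Qv.
    rewrite (bigD1 t0) ?ht0 //= eqxx big1 ?addr0 ?sv ?eqxx ?av //.
    by move=> t /andP[_ /negbTE ->].
  rewrite big1 ?andbF // => t Qt; case: eqP => // tt0; subst t.
  by rewrite ht0 (negbTE Qv) in Qt.
rewrite big1 => [|t _].
  by case: (size v == m) (all _ v) H => [] [].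
case: eqP => //= tv; subst v.
by rewrite size_map size_tuple eqxx /= in H; case/allPn: H => x /mapP[y _ ->]; rewrite -ltnS ltn_ord.
Qed.

Lemma ord_pick n a (F : 'I_n.+1 -> bool) : (forall r : 'I_n.+1, F r -> val r = a) ->
  \sum_(r < n.+1) (F r)%:Z = ((a <= n)%N && F (inord a))%:Z.
Proof.
move=> hF; case: (leqP a n) => h /=.
  rewrite (bigD1 (inord a)) //= big1 ?addr0 // => r /negbTE nr.
  case: (boolP (F r)) => // /hF ra; move: nr; rewrite -val_eqE /= inordK // ra eqxx //.
by rewrite big1 // => r _; case: (boolP (F r)) => // /hF ra; move: (ltn_ord r); rewrite ra; lia.
Qed.

Lemma ins_j k n w j : (1 <= k)%N -> (j < size w)%N ->
 \sum_(r < n.+1) ([&& size (rem_at j w) == k.-1, all (fun x => x <= n)%N (rem_at j w),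
      [&& 0 < r, all (fun x => 0 < x)%N (rem_at j w), 2 <= nth 0 (rem_at j w) 0 & r + sumn (rem_at j w) == n]
      & nat_of_ord r == nth 0 w j]%N)%:Z
 = ([&& size w == k, all (fun x => 0 < x)%N w, sumn w == n & (if j == 0 then 2 <= nth 0 w 1 else 2 <= nth 0 w 0)]%N)%:Z.
Proof.
move=> hk hj; rewrite (ord_pick (a := nth 0%N w j)); last by move=> r /and4P[_ _ _ /eqP].
rewrite rem_nth0 (rem_all _ hj) (rem_size hj) [sumn w](rem_sumn hj).
have -> : ((size w).-1 == k.-1) = (size w == k) by apply/idP/idP => /eqP ?; apply/eqP; lia.
case: (leqP (nth 0%N w j) n) => h /=; last first.
  by case: (_ + _ == n)%N /eqP; rewrite ?andbF //; lia.
rewrite inordK // eqxx andbT.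
case E: (_ + _ == n)%N; rewrite ?andbF //=.
have -> : all (fun x => x <= n)%N (rem_at j w).
  move/eqP: E => E; apply/allP => x xr; move/allP: (all_le_sumn (rem_at j w)) => /(_ x xr); lia.
by case: (j == 0%N); case: (size w == k); case: (0 < _)%N; case: all; case: (1 < _)%N.
Qed.

Lemma mrg_j k n w j : (j < size w)%N ->
 \sum_(r < n.+1) ([&& size (set_nth 0%N w j (nth 0%N w j - r)) == k.-1,
      all (fun x => x <= n)%N (set_nth 0%N w j (nth 0%N w j - r)),
      [&& 0 < r, all (fun x => 0 < x)%N (set_nth 0%N w j (nth 0%N w j - r)),
          2 <= nth 0 (set_nth 0%N w j (nth 0%N w j - r)) 0
        & r + sumn (set_nth 0%N w j (nth 0%N w j - r)) == n]
      & nat_of_ord r <= nth 0 w j]%N)%:Z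
 = ([&& size w == k.-1, all (fun x => 0 < x)%N w, sumn w == n & 2 <= nth 0 w 0]%N)%:Z
    * ((nth 0%N w j)%:Z - 1 - (j == 0%N)%:Z).
Proof.
move=> hj.
under eq_bigr => r _ do rewrite set_size // !set_all // set_sumn // set_nth0 //.
rewrite (rem_all _ hj) [sumn w](rem_sumn hj).
have e0 : (if j == 0%N then nth 0%N w j else nth 0%N w 0) = nth 0%N w 0 by case: eqP => [->|].
move: e0; set y := nth 0%N w j; set w0 := nth 0%N w 0; set x := sumn (rem_at j w) => e0.
case: (boolP [&& size w == k.-1, _, _ & _]) => G; last first.
  rewrite mul0r big1 // => r _.
  move: G e0; case: (size w == k.-1); case: (all _ (rem_at j w)); case: (all _ (rem_at j w)); case: (j == 0%N) => /=; lia.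
rewrite mul1r.
have hy : (y <= n)%N by lia.
have -> : y%:Z - 1 - (j == 0%N)%:Z = (y - 1 - (j == 0%N))%N%:Z.
  move: G e0; case: (size w == k.-1); case: (all _ (rem_at j w)); case: (j == 0%N) => /= G; lia.
rewrite -(count_r (n := n) (a := (y - 1 - (j == 0%N))%N)); last lia.
have Ha : all (fun x => x <= n)%N (rem_at j w).
  apply/allP => z zr; move/allP: (all_le_sumn (rem_at j w)) => /(_ z zr); rewrite -/x; lia.
apply: eq_bigr => r _; rewrite Ha.
move: G e0; case: (size w == k.-1); case: (all _ (rem_at j w)); case: (j == 0%N) => /=; lia.
Qed.

Theorem theorem2p4 (k n : nat) (hk : (2 <= k)%N) (hn : (k.+1 <= n)%N) :
  forall w : seq nat,
    \sum_(r < n.+1)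
      \sum_(s : (k.-1).-tuple 'I_n.+1 |
             [&& (0 < r)%N, all (fun x => 0 < x)%N (map val s),
                 (2 <= nth 0 (map val s) 0)%N & (r + sumn (map val s) == n)%N])
        stuffle [:: val r] (map val s) w
    =
    addH (addH (addH
      (comp_sum k n (fun t => (nth 0 t 0 == 1)%N && (2 <= nth 0 t 1)%N))
      (scaleH (k - 1)%N%:Z
         (comp_sum k n (fun t => (2 <= nth 0 t 0)%N && (nth 0 t 1 == 1)%N))))
      (scaleH k%:Z
         (comp_sum k n (fun t => (2 <= nth 0 t 0)%N && (2 <= nth 0 t 1)%N))))
      (scaleH (n - k)%N%:Z
         (comp_sum (k.-1) n (fun u => (2 <= nth 0 u 0)%N))) w.
Proof.
move=> w.
have CS m P : comp_sum m n P w = ([&& size w == m, all (fun x => x <= n)%N w,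
     [&& all (fun x => 0 < x)%N w, sumn w == n & P w] & true]%N)%:Z.
  rewrite /comp_sum /zw -(@tuple_count m n (fun u => [&& all (fun x => 0 < x)%N u, sumn u == n & P u]%N) true w).
  by apply: eq_bigr => t _; rewrite andbT eq_sym.
rewrite /addH /scaleH !CS.
under eq_bigr => r _ do under eq_bigr => s _ do rewrite stuffle1.
under eq_bigr => r _ do rewrite big_split /=.
rewrite big_split /= /ins_cnt /mrg_cnt.
rewrite [X in X + _ = _](_ : _ = \sum_(j < size w)
   ([&& size w == k, all (fun x => 0 < x)%N w, sumn w == n & (if nat_of_ord j == 0%N then 2 <= nth 0 w 1 else 2 <= nth 0 w 0)]%N)%:Z); last first.
  under eq_bigr => r _ do rewrite exchange_big.
  rewrite exchange_big; apply: eq_bigr => j _.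
  rewrite -(@ins_j k n w j) //; last by lia.
  apply: eq_bigr => r _.
  rewrite -(@tuple_count k.-1 n (fun u => [&& 0 < r, all (fun x => 0 < x) u, 2 <= nth 0 u 0 & r + sumn u == n]%N)).
  by apply: eq_bigr.
rewrite [X in _ + X = _](_ : _ = \sum_(j < size w)
   ([&& size w == k.-1, all (fun x => 0 < x)%N w, sumn w == n & 2 <= nth 0 w 0]%N)%:Z
    * ((nth 0%N w j)%:Z - 1 - (nat_of_ord j == 0%N)%:Z)); last first.
  under eq_bigr => r _ do rewrite exchange_big.
  rewrite exchange_big; apply: eq_bigr => j _.
  rewrite -(@mrg_j k n w j) //.
  apply: eq_bigr => r _.
  rewrite -(@tuple_count k.-1 n (fun u => [&& 0 < r, all (fun x => 0 < x) u, 2 <= nth 0 u 0 & r + sumn u == n]%N)).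
  by apply: eq_bigr.
case E: (sumn w == n); last first.
  rewrite big1 ?big1 => [| j _| j _]; rewrite ?andbF //=; lia.
have -> : all (fun x => x <= n)%N w by move/eqP: E => <-; exact: all_le_sumn.
case P: (all (fun x => 0 < x)%N w); last first.
  rewrite big1 ?big1 => [| j _| j _]; rewrite ?andbF //=; lia.
case: (eqVneq (size w) k) => Sk.
  have -> : (size w == k.-1) = false by lia.
  rewrite [X in _ + X](big1) => [|j _]; last by rewrite mul0r.
  have h0 : (0 < nth 0 w 0)%N by apply: (allP P); apply: mem_nth; rewrite Sk; lia.
  have h1 : (0 < nth 0 w 1)%N by apply: (allP P); apply: mem_nth; rewrite Sk; lia.
  rewrite [size w]Sk (_ : k = (k - 1).+1); last by lia.
  rewrite big_ord_recl /=.
  under eq_bigr => j _ do rewrite /bump /=.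
  rewrite sumr_const card_ord.
  move: h0 h1; case: (nth 0 w 0) => [|[|a]] // _; case: (nth 0 w 1) => [|[|b]] // _ /=; rewrite ?addr0; lia.
rewrite [X in X + _]big1 //.
case S': (size w == k.-1); last by rewrite big1 //=; lia.
case W: (1 < nth 0 w 0)%N; last by rewrite big1 //=; lia.
rewrite /=.
under eq_bigr do rewrite mul1r.
rewrite !sumrB sum_nth sumr_const card_ord.
have -> : \sum_(j < size w) (nat_of_ord j == 0%N)%:Z = 1.
  move/eqP: S' => S'; rewrite S' (_ : k.-1 = (k - 2).+1); last by lia.
  by rewrite big_ord_recl big1 ?addr0.
move/eqP: S' => S'; move/eqP: E => E; rewrite S' E; lia.
Qed.
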